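(* For every $n\in\mathbb{N}$ there exists a strongly well-connected $3n$-regular oriented graph on $18n+5$ vertices with no Hamilton cycle.
   Context: An oriented graph has at most one edge between any two vertices; $d$-regular means every vertex has in- and outdegree exactly $d$. A digraph $G$ on at least four vertices is strongly well-connected if for every partition $(A,B)$ of $V(G)$ with $|A|,|B|\geq 2$ there exist two edges $ab$ and $cd$ with no common vertex such that $a,d\in A$ and $b,c\in B$. A Hamilton cycle is a directed cycle through all vertices. *)

(* Defs.v *)
From mathcomp Require Import all_boot.
Set Implicit Arguments. Unset Strict Implicit. Unset Printing Implicit Defensive.

Definition oriented (V : finType) (e : rel V) : Prop :=
  (forall x, ~~ e x x) /\ (forall x y, ~~ (e x y && e y x)).

Definition regular (V : finType) (e : rel V) (d : nat) : Prop :=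
  forall x, #|[set y | e x y]| = d /\ #|[set y | e y x]| = d.

Definition strongly_well_connected (V : finType) (e : rel V) : Prop :=
  4 <= #|V| /\
  forall A : {set V}, 2 <= #|A| -> 2 <= #|~: A| ->
    exists a b c d : V,
      [/\ a \in A, d \in A, b \notin A & c \notin A] /\
      [/\ e a b, e c d & [disjoint [set a; b] & [set c; d]]].

Definition hamiltonian (V : finType) (e : rel V) : Prop :=
  exists s : seq V, [/\ uniq s, size s = #|V| & cycle e s].

(* Main.v *)
Require Import Defs.
From mathcomp Require Import all_boot zify.
Set Implicit Arguments. Unset Strict Implicit. Unset Printing Implicit Defensive.
From Stdlib Require Import Classical_Prop.
Definition circ n i j := ((i < j) && (j <= i + 3*n)) || (j + (6*n+1) <= i + 3*n).
Definition rem n i j := (i < 2*n) && (j == i + 3*n).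
Definition inner n i j := circ n i j && ~~ rem n i j.
Definition cE n o x y := [&& o <= x, x < o + (6*n+1), o <= y, y < o + (6*n+1) & inner n (x - o) (y - o)].
Definition inR n lo hi x := [|| (lo <= x) && (x < hi), (6*n+1+lo <= x) && (x < 6*n+1+hi) | (2*(6*n+1)+lo <= x) && (x < 2*(6*n+1)+hi)].
Definition E n x y :=
 [|| cE n 0 x y, cE n (6*n+1) x y, cE n (2*(6*n+1)) x y,
     (y == 3*(6*n+1)) && inR n 0 n x, (y == 3*(6*n+1)+1) && inR n n (2*n) x,
     (x == 3*(6*n+1)) && inR n (3*n) (4*n) y | (x == 3*(6*n+1)+1) && inR n (4*n) (5*n) y].
Lemma cE_self n o i y : i < 6*n+1 -> cE n o (o+i) y = (o <= y) && (y < o + (6*n+1)) && inner n i (y - o).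
Proof. move=> hi; rewrite /cE addKn leq_addr ltn_add2l hi /=. by case: (o <= y). Qed.
Lemma cE_other n o o' x y : (o' + (6*n+1) <= o) || (o + (6*n+1) <= o') -> o <= x < o + (6*n+1) -> cE n o' x y = false.
Proof. move=> h1 h2; rewrite /cE; apply/negbTE. lia. Qed.
Lemma cE_otherR n o o' x y : (o' + (6*n+1) <= o) || (o + (6*n+1) <= o') -> o <= y < o + (6*n+1) -> cE n o' x y = false.
Proof. move=> h1 h2; rewrite /cE; apply/negbTE. lia. Qed.
Lemma inR_off n o lo hi i : [|| o == 0, o == 6*n+1 | o == 2*(6*n+1)] -> i < 6*n+1 -> hi <= 6*n+1 -> lo <= hi ->
  inR n lo hi (o+i) = (lo <= i) && (i < hi).
Proof. move=> ho hI h1 h2; rewrite /inR. apply/idP/idP; lia. Qed.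
Lemma E_out n o i y : [|| o == 0, o == 6*n+1 | o == 2*(6*n+1)] -> i < 6*n+1 ->
  E n (o + i) y = [|| (o <= y) && (y < o + (6*n+1)) && inner n i (y - o),
                      (y == 3*(6*n+1)) && (i < n) | (y == 3*(6*n+1)+1) && ((n <= i) && (i < 2*n))].
Proof.
move=> ho hI; rewrite /E !inR_off //; try lia.
have h1 : (o + i == 3*(6*n+1)) = false by apply/negbTE; lia.
have h2 : (o + i == 3*(6*n+1)+1) = false by apply/negbTE; lia.
rewrite h1 h2 /= !orbF.
case/or3P: ho => /eqP ->.
- rewrite cE_self // (@cE_other _ 0) ?(@cE_other _ 0) //= ?orbF; lia.
- rewrite cE_self // (@cE_other _ (6*n+1)) ?(@cE_other _ (6*n+1)) //= ?orbF; lia.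
- rewrite cE_self // (@cE_other _ (2*(6*n+1))) ?(@cE_other _ (2*(6*n+1))) //= ?orbF; lia.
Qed.
Lemma card_count N (P : pred nat) : #|[set y : 'I_N | P (val y)]| = count P (iota 0 N).
Proof.
rewrite cardsE cardE /enum_mem size_filter -val_enum_ord count_map enumT.
by apply: eq_count => y; rewrite !inE.
Qed.
Lemma count_int a b L : count (fun j => (a <= j) && (j < b)) (iota 0 L) = minn b L - a.
Proof.
elim: L => [|L IH]; first by rewrite /= minn0.
rewrite -addn1 iotaD count_cat IH /= add0n addn0.
case: (leqP a L) => h1; case: (ltnP L b) => h2 /=; lia.
Qed.
Lemma count_and_not (T : Type) (p q : pred T) s :
  count (fun x => p x && q x) s + count (fun x => p x && ~~ q x) s = count p s.
Proof. elim: s => //= x s IH; case: (p x); case: (q x) => /=; lia. Qed.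
Lemma count_or (T : Type) (p q : pred T) s : (forall x, ~~ (p x && q x)) ->
  count (fun x => p x || q x) s = count p s + count q s.
Proof.
move=> H; elim: s => //= x s IH; move: (H x); case: (p x); case: (q x) => /=; lia.
Qed.
Lemma count_shift (Q : pred nat) lo L N : lo + L <= N ->
  count (fun y => (lo <= y) && (y < lo + L) && Q (y - lo)) (iota 0 N) = count Q (iota 0 L).
Proof.
move=> h.
have -> : N = lo + (L + (N - lo - L)) by lia.
rewrite !iotaD !count_cat add0n.
rewrite (@eq_in_count _ _ pred0 (iota 0 lo)); last first.
  by move=> y; rewrite mem_iota => hy; apply/negbTE; lia.
rewrite (@eq_in_count _ _ pred0 (iota (lo + L) _)); last first.
  by move=> y; rewrite mem_iota => hy; apply/negbTE; lia.
rewrite !count_pred0 add0n addn0. rewrite -[X in iota X L]addn0 iotaDl count_map.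
apply: eq_in_count => y; rewrite mem_iota /= => hy.
rewrite addKn; apply/idP/idP; [case/andP=> _ //|move=> ->; rewrite andbT; lia].
Qed.
Lemma cE_selfR n o i y : i < 6*n+1 -> cE n o y (o+i) = (o <= y) && (y < o + (6*n+1)) && inner n (y - o) i.
Proof. move=> hI; rewrite /cE addKn leq_addr ltn_add2l hI /=. by case: (o <= y); case: (y < _). Qed.
Lemma E_in n o i y : [|| o == 0, o == 6*n+1 | o == 2*(6*n+1)] -> i < 6*n+1 ->
  E n y (o + i) = [|| (o <= y) && (y < o + (6*n+1)) && inner n (y - o) i,
                      (y == 3*(6*n+1)) && ((3*n <= i) && (i < 4*n)) | (y == 3*(6*n+1)+1) && ((4*n <= i) && (i < 5*n))].
Proof.
move=> ho hI; rewrite /E !inR_off //; try lia.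
have h1 : (o + i == 3*(6*n+1)) = false by apply/negbTE; lia.
have h2 : (o + i == 3*(6*n+1)+1) = false by apply/negbTE; lia.
rewrite h1 h2 /= ?andbF ?orbF.
case/or3P: ho => /eqP ->.
- rewrite cE_selfR // (@cE_otherR _ 0) ?(@cE_otherR _ 0) //= ?orbF; lia.
- rewrite cE_selfR // (@cE_otherR _ (6*n+1)) ?(@cE_otherR _ (6*n+1)) //= ?orbF; lia.
- rewrite cE_selfR // (@cE_otherR _ (2*(6*n+1))) ?(@cE_otherR _ (2*(6*n+1))) //= ?orbF; lia.
Qed.
Lemma cE_bigL n o x y : o <= 2*(6*n+1) -> 3*(6*n+1) <= x -> cE n o x y = false.
Proof. move=> h1 h2; rewrite /cE; apply/negbTE; lia. Qed.
Lemma cE_bigR n o x y : o <= 2*(6*n+1) -> 3*(6*n+1) <= y -> cE n o x y = false.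
Proof. move=> h1 h2; rewrite /cE; apply/negbTE; lia. Qed.
Lemma inR_big n lo hi x : hi <= 6*n+1 -> 3*(6*n+1) <= x -> inR n lo hi x = false.
Proof. move=> h1 h2; rewrite /inR; apply/negbTE; lia. Qed.
Ltac hubL n := rewrite /E (@cE_bigL _ 0) ?(@cE_bigL _ (6*n+1)) ?(@cE_bigL _ (2*(6*n+1))) ?(@inR_big _ _ _ (3*(6*n+1))) ?(@inR_big _ _ _ (3*(6*n+1)+1)) //; try lia.
Ltac hubR n := rewrite /E (@cE_bigR _ 0) ?(@cE_bigR _ (6*n+1)) ?(@cE_bigR _ (2*(6*n+1))) ?(@inR_big _ _ _ (3*(6*n+1))) ?(@inR_big _ _ _ (3*(6*n+1)+1)) //; try lia.
Lemma E_Uout n y : E n (3*(6*n+1)) y = inR n (3*n) (4*n) y.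
Proof. hubL n. Qed.
Lemma E_Wout n y : E n (3*(6*n+1)+1) y = inR n (4*n) (5*n) y.
Proof. hubL n. Qed.
Lemma E_Uin n y : E n y (3*(6*n+1)) = inR n 0 n y.
Proof. hubR n. Qed.
Lemma E_Win n y : E n y (3*(6*n+1)+1) = inR n n (2*n) y.
Proof. hubR n. Qed.
Lemma count_pt k (b : bool) N : count (fun y => (y == k) && b) (iota 0 N) = (k < N) && b.
Proof.
case: b.
  rewrite (@eq_count _ _ (fun j => (k <= j) && (j < k.+1))); last by move=> j /=; apply/idP/idP; lia.
  rewrite count_int; case: ltnP => /= h; lia.
by rewrite andbF (@eq_count _ _ pred0) ?count_pred0 // => j; rewrite andbF.

Qed.
Lemma cnt_circ n i : i < 6*n+1 -> count (circ n i) (iota 0 (6*n+1)) = 3*n.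
Proof.
move=> hI.
rewrite (@eq_count _ _ (fun j => ((i+1 <= j) && (j < i+3*n+1)) || ((0 <= j) && (j < i+3*n+1-(6*n+1))))); last first.
  by move=> j; rewrite /circ; apply/idP/idP; lia.
rewrite count_or; last by move=> j; lia.
rewrite !count_int; lia.
Qed.
Lemma cnt_circrem n i : i < 6*n+1 -> count (fun j => circ n i j && rem n i j) (iota 0 (6*n+1)) = (i < 2*n).
Proof.
move=> hI; case: (ltnP i (2*n)) => h.
  rewrite (@eq_count _ _ (fun j => (i+3*n <= j) && (j < i+3*n+1))); last first.
    by move=> j; rewrite /circ /rem; apply/idP/idP; lia.
  rewrite count_int; lia.
rewrite (@eq_count _ _ pred0) ?count_pred0 // => j; rewrite /rem /=; apply/negbTE; lia.
Qed.
Lemma cnt_inner n i : i < 6*n+1 -> count (inner n i) (iota 0 (6*n+1)) = 3*n - (i < 2*n).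
Proof.
move=> hI; have := (@cnt_circ n i hI); have := (@cnt_circrem n i hI); have := (@count_and_not nat (circ n i) (rem n i) (iota 0 (6*n+1))).
rewrite /inner; lia.
Qed.
Lemma cnt_circ_in n i : i < 6*n+1 -> count (fun j => circ n j i) (iota 0 (6*n+1)) = 3*n.
Proof.
move=> hI.
rewrite (@eq_in_count _ _ (fun j => ((i-3*n <= j) && (j < i)) || ((i+(6*n+1)-3*n <= j) && (j < 6*n+1)))); last first.
  by move=> j; rewrite mem_iota /circ => hj; apply/idP/idP; lia.
rewrite count_or; last by move=> j; lia.
rewrite !count_int; lia.
Qed.
Lemma cnt_circrem_in n i : i < 6*n+1 -> count (fun j => circ n j i && rem n j i) (iota 0 (6*n+1)) = (3*n <= i < 5*n).
Proof.
move=> hI; case: (boolP (3*n <= i < 5*n)) => h.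
  rewrite (@eq_count _ _ (fun j => (i-3*n <= j) && (j < i-3*n+1))); last first.
    by move=> j; rewrite /circ /rem; apply/idP/idP; lia.
  rewrite count_int; lia.
rewrite (@eq_count _ _ pred0) ?count_pred0 // => j; rewrite /rem /=; apply/negbTE; lia.
Qed.
Lemma cnt_inner_in n i : i < 6*n+1 -> count (fun j => inner n j i) (iota 0 (6*n+1)) = 3*n - (3*n <= i < 5*n).
Proof.
move=> hI; have := (@cnt_circ_in n i hI); have := (@cnt_circrem_in n i hI); have := (@count_and_not nat (fun j => circ n j i) (fun j => rem n j i) (iota 0 (6*n+1))).
rewrite /inner; lia.
Qed.
Lemma cnt_inR n lo hi : lo <= hi <= 6*n+1 -> count (inR n lo hi) (iota 0 (18*n+5)) = 3*(hi-lo).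
Proof.
move=> h; rewrite /inR.
rewrite count_or; last by move=> j; lia.
rewrite count_or; last by move=> j; lia.
rewrite !count_int; lia.
Qed.
Lemma decomp n k : k < 3*(6*n+1) -> exists o i, [/\ [|| o == 0, o == 6*n+1 | o == 2*(6*n+1)], i < 6*n+1 & k = o + i].
Proof.
move=> h; case: (ltnP k (6*n+1)) => h1; first by exists 0, k; split => //; rewrite eqxx.
case: (ltnP k (2*(6*n+1))) => h2; first by exists (6*n+1), (k - (6*n+1)); split; rewrite ?eqxx ?orbT //; lia.
by exists (2*(6*n+1)), (k - 2*(6*n+1)); split; rewrite ?eqxx ?orbT //; lia.
Qed.
Lemma vcases n (k : nat) : k < 18*n+5 ->
  (exists o i, [/\ [|| o == 0, o == 6*n+1 | o == 2*(6*n+1)], i < 6*n+1 & k = o + i]) \/ k = 3*(6*n+1) \/ k = 3*(6*n+1)+1.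
Proof.
move=> h; case: (ltnP k (3*(6*n+1))) => h1; first by left; apply: decomp.
right; case: (ltnP k (3*(6*n+1)+1)) => h2; [left|right]; lia.
Qed.
Definition e n : rel 'I_(18*n+5) := fun x y => E n (val x) (val y).
Arguments e : clear implicits.
Lemma deg_out n (k : nat) : k < 18*n+5 -> count (E n k) (iota 0 (18*n+5)) = 3*n.
Proof.
move=> hk; case: (vcases hk) => [[o [i [ho hI ->]]]|[->|->]].
- rewrite (eq_count (fun y => E_out y ho hI)).
  rewrite count_or; last by move=> y; lia.
  rewrite count_or; last by move=> y; lia.
  rewrite count_shift; last by lia.
  rewrite cnt_inner // !count_pt; lia.
- by rewrite (eq_count (@E_Uout n)) cnt_inR; lia.
- by rewrite (eq_count (@E_Wout n)) cnt_inR; lia.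
Qed.
Lemma deg_in n (k : nat) : k < 18*n+5 -> count (fun y => E n y k) (iota 0 (18*n+5)) = 3*n.
Proof.
move=> hk; case: (vcases hk) => [[o [i [ho hI ->]]]|[->|->]].
- rewrite (eq_count (fun y => E_in y ho hI)).
  rewrite count_or; last by move=> y; lia.
  rewrite count_or; last by move=> y; lia.
  rewrite (count_shift (fun j => inner n j i)); last by lia.
  rewrite cnt_inner_in // !count_pt; lia.
- by rewrite (eq_count (@E_Uin n)) cnt_inR; lia.
- by rewrite (eq_count (@E_Win n)) cnt_inR; lia.
Qed.
Lemma E_lt n x y : E n x y -> (x < 18*n+5) && (y < 18*n+5).
Proof. rewrite /E /cE /inR => H. lia. Qed.
Lemma E_antis n x y : E n x y -> E n y x -> False.
Proof.
move=> h1 h2; have /andP[hx _] := E_lt h1.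
case: (vcases hx) => [[o [i [ho hI ex]]]|[ex|ex]]; subst x.
- rewrite E_out // in h1; rewrite E_in // in h2; move: h1 h2; rewrite /inner /circ /rem. lia.
- by rewrite E_Uout in h1; rewrite E_Uin in h2; move: h1 h2; rewrite /inR; lia.
- by rewrite E_Wout in h1; rewrite E_Win in h2; move: h1 h2; rewrite /inR; lia.
Qed.
Lemma E_loop n x : E n x x -> False.
Proof.
move=> h1; have /andP[hx _] := E_lt h1.
case: (vcases hx) => [[o [i [ho hI ex]]]|[ex|ex]]; subst x.
- rewrite E_out // in h1; move: h1; rewrite /inner /circ /rem. lia.
- by rewrite E_Uout in h1; move: h1; rewrite /inR; lia.
- by rewrite E_Wout in h1; move: h1; rewrite /inR; lia.
Qed.
Lemma reg_e n : regular (e n) (3*n).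
Proof.
move=> x; split.
- rewrite /e (card_count _ (E n (val x))); apply: deg_out; exact: ltn_ord.
- rewrite /e (card_count _ (fun k => E n k (val x))); apply: deg_in; exact: ltn_ord.
Qed.
Lemma or_e n : oriented (e n).
Proof.
split=> [x|x y]; apply/negP; rewrite /e.
- by move/E_loop.
- by case/andP=> /E_antis H /H.
Qed.
Lemma E_stay n o x y : [|| o == 0, o == 6*n+1 | o == 2*(6*n+1)] -> o <= x < o + (6*n+1) ->
  y < 3*(6*n+1) -> E n x y -> o <= y < o + (6*n+1).
Proof.
move=> ho hx hy; have -> : x = o + (x - o) by lia.
rewrite E_out //; last by lia.
lia.
Qed.
Lemma nonham n : ~ hamiltonian (e n).
Proof.
case=> s [us ss cs].
have alls : forall x, x \in s.
  move=> x; case: (boolP (x \in s)) => // hx; exfalso.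
  have : size (x :: s) <= size (enum 'I_(18*n+5)).
    apply: uniq_leq_size; first by rewrite /= hx us.
    by move=> z _; rewrite mem_enum.
  by rewrite /= ss size_enum_ord card_ord ltnn.
set f := next s.
have fe : forall x, e n x (f x) by move=> x; apply: next_cycle cs (alls x).
have finj : injective f by apply: (can_inj (prev_next us)).
have fconn : forall x y, fconnect f x y.
  by move=> x y; rewrite (fconnect_cycle (cycle_next us) (alls x)) alls.
have hU : 3*(6*n+1) < 18*n+5 by lia.
have key : forall o, [|| o == 0, o == 6*n+1 | o == 2*(6*n+1)] ->
   exists x : 'I_(18*n+5), (o <= val x < o + (6*n+1)) && (3*(6*n+1) <= val (f x)).
  move=> o ho; apply: Classical_Prop.NNPP => hn.
  have ho' : o < 18*n+5 by lia.
  have cl : forall x : 'I_(18*n+5), o <= val x < o + (6*n+1) -> o <= val (f x) < o + (6*n+1).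
    move=> x hx; apply: (E_stay ho hx); last exact: fe.
    rewrite ltnNge; apply/negP => hh; apply: hn; exists x; by rewrite hx hh.
  have := iter_findex (fconn (Ordinal ho') (Ordinal hU)).
  set k := findex _ _ _ => hk.
  have : o <= val (iter k f (Ordinal ho')) < o + (6*n+1).
    elim: k {hk} => [|k IH] /=; first lia.
    exact: cl.
  rewrite hk /=; lia.
have [x0 /andP[h0 g0]] := key 0 ltac:(by rewrite eqxx).
have [x1 /andP[h1 g1]] := key (6*n+1) ltac:(by rewrite eqxx orbT).
have [x2 /andP[h2 g2]] := key (2*(6*n+1)) ltac:(by rewrite eqxx !orbT).
have l0 : val (f x0) < 18*n+5 := ltn_ord _. have l1 : val (f x1) < 18*n+5 := ltn_ord _. have l2 : val (f x2) < 18*n+5 := ltn_ord _.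
have : (val (f x0) = val (f x1)) \/ (val (f x0) = val (f x2)) \/ (val (f x1) = val (f x2)) by lia.
case=> [/val_inj/finj E01|[/val_inj/finj E02|/val_inj/finj E12]].
- by subst; lia.
- by subst; lia.
- by subst; lia.
Qed.
Inductive reach (P : nat -> nat -> bool) : nat -> nat -> Prop :=
 | rch_refl x : reach P x x
 | rch_step x y z : P x y -> reach P y z -> reach P x z.
Lemma reach_trans P x y z : reach P x y -> reach P y z -> reach P x z.
Proof. elim=> [//|x1 y1 z1 h _ IH] /IH; exact: rch_step. Qed.
Lemma reach1 (P : nat -> nat -> bool) x y : P x y -> reach P x y.
Proof. move=> h; apply: rch_step h (rch_refl _ _). Qed.
Lemma cross P (Q : pred nat) x y : reach P x y -> Q x = false -> Q y ->
  exists c d, [/\ P c d, ~~ Q c & Q d].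
Proof.
elim=> [z -> //|x1 y1 z1 h _ IH] hx hz.
case hy: (Q y1); last exact: IH.
by exists x1, y1; rewrite hx hy h.
Qed.
Definition PZ n a b x y := E n x y && [&& x != a, x != b, y != a & y != b].
Lemma PZ_intro n a b x y : (x != a) && (x != b) -> (y != a) && (y != b) -> E n x y -> PZ n a b x y.
Proof. by move=> h1 h2 h3; rewrite /PZ h3 /=; lia. Qed.
Lemma E_intra n o i j : [|| o == 0, o == 6*n+1 | o == 2*(6*n+1)] -> i < 6*n+1 -> j < 6*n+1 ->
  inner n i j -> E n (o+i) (o+j).
Proof. move=> ho hi hj h; rewrite E_out // addKn h andbT; apply/orP; left; lia. Qed.
Lemma jump n i j d : 0 < n -> i < 6*n+1 -> j < 6*n+1 -> (i + d == j) || (i + d == j + (6*n+1)) ->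
  0 < d -> (d < 3*n) || ((d == 3*n) && (2*n <= i)) -> inner n i j.
Proof. move=> hn hi hj h1 h2 h3; rewrite /inner /circ /rem. lia. Qed.
Lemma pred_ex n i j k : 0 < k -> i < 6*n+1 -> j < 6*n+1 -> (j == i + k) || (j + (6*n+1) == i + k) ->
  exists j1, [/\ j1 < 6*n+1, (j1 == i + (k-1)) || (j1 + (6*n+1) == i + (k-1)) & (j1 + 1 == j) || (j1 + 1 == j + (6*n+1))].
Proof.
move=> hk hi hj h; case: (posnP j) => hj0.
  by exists (6*n); split; lia.
by exists (j - 1); split; lia.
Qed.
Lemma intra n a b o i j : 0 < n -> [|| o == 0, o == 6*n+1 | o == 2*(6*n+1)] -> i < 6*n+1 -> j < 6*n+1 ->
  (o + i != a) && (o + i != b) -> (o + j != a) && (o + j != b) -> reach (PZ n a b) (o+i) (o+j).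
Proof.
move=> hn ho hi hj hzi.
have [k [hk hjk]] : exists k, k < 6*n+1 /\ ((j == i + k) || (j + (6*n+1) == i + k)).
  case: (leqP i j) => h; [exists (j - i)|exists (j + (6*n+1) - i)]; split; clear -h hi hj; lia.
elim/ltn_ind: k j hj hk hjk => k IH j hj hk hjk hzj.
case: (posnP k) => hk0.
  have -> : j = i by clear -hk0 hjk hi hj; lia.
  exact: (rch_refl _ _).
have [j1 [hj1 hj1k hj1j]] := pred_ex hk0 hi hj hjk.
have hk' : k - 1 < k by clear -hk0; lia.
have hkm : k - 1 < 6*n+1 by clear -hk; lia.
case: (boolP ((o + j1 != a) && (o + j1 != b))) => hz1.
  apply: reach_trans (IH (k-1) hk' j1 hj1 hkm hj1k hz1) _.
  apply: reach1; apply: PZ_intro hz1 hzj _.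
  by apply: E_intra => //; apply: (@jump _ _ _ 1) => //; clear -hj1j hn; lia.
have hk1 : 1 < k by clear -hz1 hzi hj1k hk0 hi hj1; lia.
have [j2 [hj2 hj2k hj2j]] := @pred_ex n i j1 (k-1) ltac:(clear -hk1; lia) hi hj1 hj1k.
have hk'' : k - 1 - 1 < k by clear -hk1; lia.
have hkm' : k - 1 - 1 < 6*n+1 by clear -hk; lia.
case: (boolP ((o + j2 != a) && (o + j2 != b))) => hz2.
  apply: reach_trans (IH (k-1-1) hk'' j2 hj2 hkm' hj2k hz2) _.
  apply: reach1; apply: PZ_intro hz2 hzj _.
  by apply: E_intra => //; apply: (@jump _ _ _ 2) => //; clear -hj1j hj2j hn hj hj1 hj2; lia.
have hk2 : 2 < k by clear -hz2 hzi hj2k hk1 hi hj2; lia.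
have [j3 [hj3 hj3k hj3j]] := @pred_ex n i j2 (k-1-1) ltac:(clear -hk2; lia) hi hj2 hj2k.
have hz3 : (o + j3 != a) && (o + j3 != b) by clear -hz1 hz2 hj2j hj3j hj1 hj2 hj3 hn; lia.
have hk3 : k - 1 - 1 - 1 < k by clear -hk2; lia.
have hkm3 : k - 1 - 1 - 1 < 6*n+1 by clear -hk; lia.
apply: reach_trans (IH (k-1-1-1) hk3 j3 hj3 hkm3 hj3k hz3) _.
have hj3j' : (j3 + 3 == j) || (j3 + 3 == j + (6*n+1)) by clear -hj1j hj2j hj3j hj hj1 hj2 hj3 hn; lia.
case: (boolP ((1 < n) || (2*n <= j3))) => hc.
  apply: reach1; apply: PZ_intro hz3 hzj _.
  by apply: E_intra => //; apply: (@jump _ _ _ 3) => //; clear -hj3j' hc hn; lia.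
have hn1 : n = 1 by clear -hc hn; lia.
have hab : ((a == o + j1) && (b == o + j2)) || ((a == o + j2) && (b == o + j1)).
  clear -hz1 hz2 hj2j hj1 hj2 hn; lia.
have hj3' : j3 < 2 by clear -hc hn1; lia.
have hjj : j = j3 + 3 by clear -hj3' hj3j' hn1 hj; lia.
subst n j.
case: (posnP j3) => h30.
- subst j3; apply: (@rch_step _ _ (3*(6*1+1))).
    apply: PZ_intro hz3 _ _; [clear -hab ho hj1 hj2; lia| rewrite E_Uin inR_off //; lia].
  apply: reach1; apply: PZ_intro _ hzj _; [clear -hab ho hj1 hj2; lia| rewrite E_Uout inR_off //; lia].
- have ej3 : j3 = 1 by clear -h30 hj3'; lia.
  subst j3.
  apply: (@rch_step _ _ (3*(6*1+1)+1)).
    apply: PZ_intro hz3 _ _; [clear -hab ho hj1 hj2; lia| rewrite E_Win inR_off //; lia].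
  apply: reach1; apply: PZ_intro _ hzj _; [clear -hab ho hj1 hj2; lia| rewrite E_Wout inR_off //; lia].
Qed.
Definition bad n a b := (n == 1) && [|| (a == 0) && (b == 1), (a==3)&&(b==4), (a==7)&&(b==8), (a==10)&&(b==11), (a==14)&&(b==15) | (a==17)&&(b==18)].
Lemma link_out_contra n a b o : 0 < n -> [|| o == 0, o == 6*n+1 | o == 2*(6*n+1)] -> E n a b -> ~~ bad n a b ->
  ~~ ((o != a) && (o != b) && (3*(6*n+1) != a) && (3*(6*n+1) != b)) ->
  ~~ ((o + n != a) && (o + n != b) && (3*(6*n+1)+1 != a) && (3*(6*n+1)+1 != b)) ->
  ~~ ((1 < n) && (o + 1 != a) && (o + 1 != b) && (3*(6*n+1) != a) && (3*(6*n+1) != b)) -> False.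
Proof.
move=> hn ho hE hb h1 h2 h3.
have hab : a != b by apply/eqP => eab; subst; exact: (E_loop hE).
move: h1 h2 h3; rewrite !negb_and !negbK => h1 h2 h3.
have hnm : n < 6*n+1 by lia.
case/orP: h1 => [/orP[/orP[|]|]|] /eqP e1; case/orP: h2 => [/orP[/orP[|]|]|] /eqP e2;
 first [ (clear -e1 e2 hn hab ho; lia) |
   (subst a b; move: hb h3; clear -ho hn; rewrite /bad; lia) |
   (subst a b; rewrite ?E_Uout ?E_Wout ?E_Uin ?E_Win ?(E_out _ ho hnm) ?(E_in _ ho hnm) in hE;
    move: hE; clear -ho hn; rewrite /inR /inner /circ /rem; lia) ].
Qed.
Lemma link_in_contra n a b o : 0 < n -> [|| o == 0, o == 6*n+1 | o == 2*(6*n+1)] -> E n a b -> ~~ bad n a b ->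
  ~~ ((o + 3*n != a) && (o + 3*n != b) && (3*(6*n+1) != a) && (3*(6*n+1) != b)) ->
  ~~ ((o + 4*n != a) && (o + 4*n != b) && (3*(6*n+1)+1 != a) && (3*(6*n+1)+1 != b)) ->
  ~~ ((1 < n) && (o + (3*n+1) != a) && (o + (3*n+1) != b) && (3*(6*n+1) != a) && (3*(6*n+1) != b)) -> False.
Proof.
move=> hn ho hE hb h1 h2 h3.
have hab : a != b by apply/eqP => eab; subst; exact: (E_loop hE).
move: h1 h2 h3; rewrite !negb_and !negbK => h1 h2 h3.
have h3m : 3*n < 6*n+1 by lia.
have h4m : 4*n < 6*n+1 by lia.
case/orP: h1 => [/orP[/orP[|]|]|] /eqP e1; case/orP: h2 => [/orP[/orP[|]|]|] /eqP e2;
 first [ (clear -e1 e2 hn hab ho; lia) |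
   (subst a b; move: hb h3; clear -ho hn; rewrite /bad; lia) |
   (subst a b; rewrite ?E_Uout ?E_Wout ?E_Uin ?E_Win ?(E_out _ ho h3m) ?(E_out _ ho h4m) ?(E_in _ ho h3m) ?(E_in _ ho h4m) in hE;
    move: hE; clear -ho hn; rewrite /inR /inner /circ /rem; lia) ].
Qed.
Lemma link_out n a b o : 0 < n -> [|| o == 0, o == 6*n+1 | o == 2*(6*n+1)] -> E n a b -> ~~ bad n a b ->
  exists i h, [/\ i < 6*n+1, (h == 3*(6*n+1)) || (h == 3*(6*n+1)+1), (o+i != a) && (o+i != b),
                  (h != a) && (h != b) & E n (o+i) h].
Proof.
move=> hn ho hE hb.
case: (boolP ((o != a) && (o != b) && (3*(6*n+1) != a) && (3*(6*n+1) != b))) => h1.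
  exists 0, (3*(6*n+1)); split; rewrite ?addn0 ?eqxx //; try lia.
  by rewrite E_Uin -{1}(addn0 o) inR_off //; lia.
case: (boolP ((o + n != a) && (o + n != b) && (3*(6*n+1)+1 != a) && (3*(6*n+1)+1 != b))) => h2.
  exists n, (3*(6*n+1)+1); split; rewrite ?eqxx ?orbT //; try lia.
  by rewrite E_Win inR_off //; lia.
case: (boolP ((1 < n) && (o + 1 != a) && (o + 1 != b) && (3*(6*n+1) != a) && (3*(6*n+1) != b))) => h3.
  exists 1, (3*(6*n+1)); split; rewrite ?eqxx //; try lia.
  by rewrite E_Uin inR_off //; lia.
by case: (link_out_contra hn ho hE hb h1 h2 h3).
Qed.
Lemma link_in n a b o : 0 < n -> [|| o == 0, o == 6*n+1 | o == 2*(6*n+1)] -> E n a b -> ~~ bad n a b ->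
  exists i h, [/\ i < 6*n+1, (h == 3*(6*n+1)) || (h == 3*(6*n+1)+1), (o+i != a) && (o+i != b),
                  (h != a) && (h != b) & E n h (o+i)].
Proof.
move=> hn ho hE hb.
case: (boolP ((o + 3*n != a) && (o + 3*n != b) && (3*(6*n+1) != a) && (3*(6*n+1) != b))) => h1.
  exists (3*n), (3*(6*n+1)); split; rewrite ?eqxx //; try lia.
  by rewrite E_Uout inR_off //; lia.
case: (boolP ((o + 4*n != a) && (o + 4*n != b) && (3*(6*n+1)+1 != a) && (3*(6*n+1)+1 != b))) => h2.
  exists (4*n), (3*(6*n+1)+1); split; rewrite ?eqxx ?orbT //; try lia.
  by rewrite E_Wout inR_off //; lia.
case: (boolP ((1 < n) && (o + (3*n+1) != a) && (o + (3*n+1) != b) && (3*(6*n+1) != a) && (3*(6*n+1) != b))) => h3.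
  exists (3*n+1), (3*(6*n+1)); split; rewrite ?eqxx //; try lia.
  by rewrite E_Uout inR_off //; lia.
by case: (link_in_contra hn ho hE hb h1 h2 h3).
Qed.
Lemma E_comp n a b : E n a b -> a < 3*(6*n+1) -> b < 3*(6*n+1) ->
  exists o, [/\ [|| o == 0, o == 6*n+1 | o == 2*(6*n+1)], o <= a < o + (6*n+1) & o <= b < o + (6*n+1)].
Proof.
move=> hE ha hb; have [o [i [ho hi ea]]] := decomp ha.
exists o; split => //; first lia.
by apply: (E_stay ho _ hb hE); lia.
Qed.
Lemma reach_all n a b : 0 < n -> E n a b -> ~~ bad n a b -> forall x y, x < 18*n+5 -> y < 18*n+5 ->
  (x != a) && (x != b) -> (y != a) && (y != b) -> reach (PZ n a b) x y.
Proof.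
move=> hn hE hb.
have [ha hb'] : a < 18*n+5 /\ b < 18*n+5 by have := E_lt hE; lia.
have toHub : forall x, x < 18*n+5 -> (x != a) && (x != b) -> exists h,
    [/\ (h == 3*(6*n+1)) || (h == 3*(6*n+1)+1), (h != a) && (h != b) & reach (PZ n a b) x h].
  move=> x hx hz; case: (vcases hx) => [[o [i [ho hI ex]]]|ex].
  - have [i' [h [hi' hh hz' hhz hE']]] := link_out hn ho hE hb.
    exists h; split => //.
    rewrite ex; apply: reach_trans (intra hn ho hI hi' _ hz') _; first by rewrite -ex.
    by apply: reach1; apply: PZ_intro hz' hhz hE'.
  - exists x; split => //; [clear -ex; lia | exact: (rch_refl _ _)].
have fromHub : forall x, x < 18*n+5 -> (x != a) && (x != b) -> exists h,
    [/\ (h == 3*(6*n+1)) || (h == 3*(6*n+1)+1), (h != a) && (h != b) & reach (PZ n a b) h x].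
  move=> x hx hz; case: (vcases hx) => [[o [i [ho hI ex]]]|ex].
  - have [i' [h [hi' hh hz' hhz hE']]] := link_in hn ho hE hb.
    exists h; split => //.
    rewrite ex; apply: rch_step (intra hn ho hi' hI hz' _); first by apply: PZ_intro hhz hz' hE'.
    by rewrite -ex.
  - exists x; split => //; [clear -ex; lia | exact: (rch_refl _ _)].
have hubs : forall h1 h2, (h1 == 3*(6*n+1)) || (h1 == 3*(6*n+1)+1) -> (h2 == 3*(6*n+1)) || (h2 == 3*(6*n+1)+1) ->
    (h1 != a) && (h1 != b) -> (h2 != a) && (h2 != b) -> reach (PZ n a b) h1 h2.
  move=> h1 h2 e1 e2 z1 z2.
  case: (eqVneq h1 h2) => [->|ne]; first exact: (rch_refl _ _).
  have [ha3 hb3] : a < 3*(6*n+1) /\ b < 3*(6*n+1) by clear -e1 e2 z1 z2 ne ha hb'; lia.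
  have [o [ho hao hbo]] := E_comp hE ha3 hb3.
  have [o' [ho' free]] : exists o', [|| o' == 0, o' == 6*n+1 | o' == 2*(6*n+1)] /\
      (forall i, i < 6*n+1 -> (o' + i != a) && (o' + i != b)).
    case: (ltnP a (6*n+1)) => hc.
      exists (6*n+1); split; [by rewrite eqxx orbT | move=> i hi; clear -hc hi ho hao hbo; lia].
    exists 0; split; [by rewrite eqxx | move=> i hi; clear -hc hi ho hao hbo; lia].
  have i0 : 0 < 6*n+1 by lia.
  have i1 : n < 6*n+1 by lia.
  have i3 : 3*n < 6*n+1 by lia.
  have i4 : 4*n < 6*n+1 by lia.
  have f0 := free _ i0. have fn := free _ i1. have f3 := free _ i3. have f4 := free _ i4.
  have zU : (3*(6*n+1) != a) && (3*(6*n+1) != b) by clear -ha3 hb3; lia.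
  have zW : (3*(6*n+1)+1 != a) && (3*(6*n+1)+1 != b) by clear -ha3 hb3; lia.
  have UW : reach (PZ n a b) (3*(6*n+1)) (3*(6*n+1)+1).
    apply: (@rch_step _ _ (o' + 3*n)).
      by apply: PZ_intro zU f3 _; rewrite E_Uout inR_off //; clear -hn; lia.
    apply: reach_trans (intra hn ho' i3 i1 f3 fn) _.
    by apply: reach1; apply: PZ_intro fn zW _; rewrite E_Win inR_off //; clear -hn; lia.
  have WU : reach (PZ n a b) (3*(6*n+1)+1) (3*(6*n+1)).
    apply: (@rch_step _ _ (o' + 4*n)).
      by apply: PZ_intro zW f4 _; rewrite E_Wout inR_off //; clear -hn; lia.
    apply: reach_trans (intra hn ho' i4 i0 f4 f0) _.
    by apply: reach1; apply: PZ_intro f0 zU _; rewrite E_Uin inR_off //; clear -hn; lia.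
  by case/orP: e1 => /eqP ->; case/orP: e2 => /eqP ->; first [exact: (rch_refl _ _) | exact: UW | exact: WU].
move=> x y hx hy zx zy.
have [h1 [e1 z1 r1]] := toHub x hx zx.
have [h2 [e2 z2 r2]] := fromHub y hy zy.
exact: reach_trans r1 (reach_trans (hubs _ _ e1 e2 z1 z2) r2).
Qed.
Lemma find n a b (Q : pred nat) : 0 < n -> E n a b -> ~~ bad n a b -> forall x y, x < 18*n+5 -> y < 18*n+5 ->
  (x != a) && (x != b) -> (y != a) && (y != b) -> Q x = false -> Q y ->
  exists c d, [/\ E n c d, (c != a) && (c != b), (d != a) && (d != b), ~~ Q c & Q d].
Proof.
move=> hn hE hb x y hx hy zx zy qx qy.
have [c [d [hP qc qd]]] := cross (reach_all hn hE hb hx hy zx zy) qx qy.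
move: hP; rewrite /PZ => /andP[hcd hz].
exists c, d; split => //; clear -hz; lia.
Qed.
Lemma dummy n x y : 0 < n -> x < 18*n+5 -> y < 18*n+5 ->
  exists p, [/\ E n p (p+1), ~~ bad n p (p+1), (x != p) && (x != p+1) & (y != p) && (y != p+1)].
Proof.
move=> hn hx hy.
have [o [ho hxo hyo]] : exists o, [/\ [|| o == 0, o == 6*n+1 | o == 2*(6*n+1)],
   (x < o) || (o + (6*n+1) <= x) & (y < o) || (o + (6*n+1) <= y)].
  case: (boolP ((6*n+1 <= x) && (6*n+1 <= y))) => h1.
    by exists 0; split; rewrite ?eqxx //; lia.
  case: (boolP (((x < 6*n+1) || (2*(6*n+1) <= x)) && ((y < 6*n+1) || (2*(6*n+1) <= y)))) => h2.
    by exists (6*n+1); split; rewrite ?eqxx ?orbT //; lia.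
  by exists (2*(6*n+1)); split; rewrite ?eqxx ?orbT //; lia.
exists (o + 2); split; try (clear -hxo hyo hn; lia).
- rewrite -addnA; apply: E_intra => //; try lia.
  by apply: (@jump _ _ _ 1) => //; lia.
- rewrite /bad; clear -ho; lia.
Qed.
Lemma disj_ord N (x y z w : 'I_N) : val x != val z -> val x != val w -> val y != val z -> val y != val w ->
  [disjoint [set x; y] & [set z; w]].
Proof.
move=> h1 h2 h3 h4; rewrite -setI_eq0; apply/eqP/setP => t; rewrite !inE.
apply/negP => /andP[/orP[/eqP->|/eqP->] /orP[/eqP h|/eqP h]]; move: h1 h2 h3 h4; rewrite h eqxx //=;
  by rewrite ?andbF ?andFb.
Qed.
Lemma swc n : 0 < n -> strongly_well_connected (e n).
Proof.
move=> hn; split; first by rewrite card_ord; lia.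
move=> A hA hB.
have /card_gt1P [a0 [a1 [a0A a1A a01]]] := hA.
have /card_gt1P [b0 [b1 [b0B b1B b01]]] := hB.
pose inA k := [exists z in A, val z == k].
have inAE : forall z : 'I_(18*n+5), inA (val z) = (z \in A).
  move=> z; apply/existsP/idP => [[z' /andP[hz' /eqP /val_inj <-]] //|hz].
  by exists z; rewrite hz eqxx.
have fin : forall a b c d, E n a b -> E n c d -> inA a -> ~~ inA b -> ~~ inA c -> inA d ->
    a != c -> a != d -> b != c -> b != d ->
    exists a0 b0 c0 d0 : 'I_(18*n+5), [/\ a0 \in A, d0 \in A, b0 \notin A & c0 \notin A] /\
      [/\ e n a0 b0, e n c0 d0 & [disjoint [set a0; b0] & [set c0; d0]]].
  move=> a b c d hab hcd ia ib ic id n1 n2 n3 n4.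
  have /andP[ha hb] := E_lt hab. have /andP[hc hd] := E_lt hcd.
  exists (Ordinal ha), (Ordinal hb), (Ordinal hc), (Ordinal hd).
  rewrite -!inAE /=; split; first by split.
  by split => //; apply: disj_ord.
have eqA : forall (z : 'I_(18*n+5)) k, z \in A -> ~~ inA k -> val z != k.
  by move=> z k hz hk; apply/eqP => ez; move: hk; rewrite -ez inAE hz.
have eqB : forall (z : 'I_(18*n+5)) k, z \notin A -> inA k -> val z != k.
  by move=> z k hz hk; apply/eqP => ez; move: hk; rewrite -ez inAE (negbTE hz).
rewrite !inE in b0B b1B.
have ha0 := ltn_ord a0. have hb0 := ltn_ord b0.
have [p [hp bp zp1 zp2]] := dummy hn ha0 hb0.
have [c1 [d1 [h1 _ _ q1 q1']]] := @find n p (p+1) (fun k => ~~ inA k) hn hp bp _ _ ha0 hb0 zp1 zp2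
  ltac:(by rewrite /= inAE a0A) ltac:(by rewrite /= inAE).
have [c2 [d2 [h2 _ _ q2 q2']]] := @find n p (p+1) inA hn hp bp _ _ hb0 ha0 zp2 zp1
  ltac:(by rewrite inAE (negbTE b0B)) ltac:(by rewrite inAE).
rewrite negbK in q1.
case: (boolP (bad n c1 d1)) => bd1; last first.
  have [a' [a'A na']] : exists a' : 'I_(18*n+5), a' \in A /\ val a' != c1.
    case: (eqVneq (val a0) c1) => h.
    - exists a1; split; first exact: a1A.
      by apply/eqP => h'; move: a01; rewrite -(inj_eq val_inj) h h' eqxx.
    - by exists a0; split.
  have [b' [b'B nb']] : exists b' : 'I_(18*n+5), b' \notin A /\ val b' != d1.
    case: (eqVneq (val b0) d1) => h.
    - exists b1; split; first exact: b1B.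
      by apply/eqP => h'; move: b01; rewrite -(inj_eq val_inj) h h' eqxx.
    - by exists b0; split.
  have zb : (val b' != c1) && (val b' != d1) by rewrite nb' eqB.
  have za : (val a' != c1) && (val a' != d1) by rewrite na' eqA.
  have [c [d [hcd zc zd qc qd]]] := @find n c1 d1 inA hn h1 bd1 _ _ (ltn_ord b') (ltn_ord a') zb za
    ltac:(by rewrite inAE (negbTE b'B)) ltac:(by rewrite inAE).
  apply: (fin c1 d1 c d) => //; clear -zc zd; lia.
case: (boolP (bad n c2 d2)) => bd2; last first.
  have [a' [a'A na']] : exists a' : 'I_(18*n+5), a' \in A /\ val a' != d2.
    case: (eqVneq (val a0) d2) => h.
    - exists a1; split; first exact: a1A.
      by apply/eqP => h'; move: a01; rewrite -(inj_eq val_inj) h h' eqxx.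
    - by exists a0; split.
  have [b' [b'B nb']] : exists b' : 'I_(18*n+5), b' \notin A /\ val b' != c2.
    case: (eqVneq (val b0) c2) => h.
    - exists b1; split; first exact: b1B.
      by apply/eqP => h'; move: b01; rewrite -(inj_eq val_inj) h h' eqxx.
    - by exists b0; split.
  have zb : (val b' != c2) && (val b' != d2) by rewrite nb' eqB.
  have za : (val a' != c2) && (val a' != d2) by rewrite na' eqA.
  have [c [d [hcd zc zd qc qd]]] := @find n c2 d2 (fun k => ~~ inA k) hn h2 bd2 _ _ (ltn_ord a') (ltn_ord b') za zb
    ltac:(by rewrite /= inAE a'A) ltac:(by rewrite /= inAE).
  rewrite negbK in qc.
  apply: (fin c d c2 d2) => //; clear -zc zd; lia.
have n1 : c1 != c2 by apply/eqP => h; move: q2; rewrite -h q1.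
have n2 : d1 != d2 by apply/eqP => h; move: q1'; rewrite h q2'.
have n3 : ~~ ((c1 == d2) && (d1 == c2)).
  apply/negP => /andP[/eqP e1 /eqP e2]; subst; exact: (E_antis h1 h2).
apply: (fin c1 d1 c2 d2) => //; move: bd1 bd2 n1 n2 n3; rewrite /bad; clear; lia.
Qed.
Theorem proposition7p1 (n : nat) : 0 < n ->
  exists e : rel 'I_(18 * n + 5),
    [/\ oriented e, regular e (3 * n), strongly_well_connected e
      & ~ hamiltonian e].
Proof.
move=> hn; exists (e n); split; [exact: or_e | exact: reg_e | exact: swc | exact: nonham].
Qed.
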